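(* Let $N\geq3$, $J>0$, $\gamma>0$, and let $$H_W=J\sum_{i=1}^N\left[-2\sigma_i^z+\sigma_i^z\sigma_{i+1}^z-\gamma\,\boldsymbol{\sigma}_i\cdot\boldsymbol{\sigma}_{i+1}\right]$$ on $(\mathbb{C}^2)^{\otimes N}$ with periodic boundary conditions. Then $|W_N\rangle=\frac{1}{\sqrt N}\left(|10\cdots0\rangle+|010\cdots0\rangle+\cdots+|0\cdots01\rangle\right)$ is a ground state of $H_W$ (an eigenvector for its smallest eigenvalue), and the ground space is degenerate (it also contains $|0\rangle^{\otimes N}$).
   Context: $\sigma^x,\sigma^y,\sigma^z$ are the Pauli matrices with $\sigma^z|0\rangle=|0\rangle$, $\sigma^z|1\rangle=-|1\rangle$; $\sigma_i^a$ acts on qubit $i$; $\boldsymbol{\sigma}_i\cdot\boldsymbol{\sigma}_{j}=\sigma_i^x\sigma_j^x+\sigma_i^y\sigma_j^y+\sigma_i^z\sigma_j^z$. Periodic boundary conditions: site indices are taken mod $N$, so $\sigma_{N+1}=\sigma_1$. *)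

(* Defs.v *)
From HB Require Import structures.
From mathcomp Require Import all_boot all_order all_algebra all_field.
Set Implicit Arguments. Unset Strict Implicit. Unset Printing Implicit Defensive.
Import Order.TTheory GRing.Theory Num.Theory.
Local Open Scope ring_scope.

(* Computational basis of (C^2)^{(x)N}: basis index x : 'I_(2^N) corresponds to the
   bitstring whose qubit i (0-based, i < N) is bit i of x (binary expansion). *)
Definition bit (i : nat) (x : nat) : 'I_2 := inord ((x %/ 2 ^ i) %% 2).

(* Pauli matrices in the basis (|0>, |1>): sigma^z|0> = |0>, sigma^z|1> = -|1>. *)
Definition sigmax : 'M[algC]_2 := \matrix_(a < 2, b < 2) (if a != b then 1 else 0).
Definition sigmay : 'M[algC]_2 :=
  \matrix_(a < 2, b < 2)
    (if (val a == 0%N) && (val b == 1%N) then - 'i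
     else if (val a == 1%N) && (val b == 0%N) then 'i else 0).
Definition sigmaz : 'M[algC]_2 :=
  \matrix_(a < 2, b < 2) (if a == b then (if val a == 0%N then 1 else -1) else 0).

(* s acting on qubit i (identity on the other qubits): the entries of
   I (x) ... (x) s (x) ... (x) I. *)
Definition site (N : nat) (s : 'M[algC]_2) (i : nat) : 'M[algC]_(2 ^ N) :=
  \matrix_(x, y)
    (s (bit i x) (bit i y) *
     ([forall j : 'I_N, (val j != i) ==> (bit j x == bit j y)])%:R).

Definition nxt (N i : nat) : nat := (i.+1 %% N)%N.

Definition dotS (N i : nat) : 'M[algC]_(2 ^ N) :=
  site N sigmax i *m site N sigmax (nxt N i)
  + site N sigmay i *m site N sigmay (nxt N i)
  + site N sigmaz i *m site N sigmaz (nxt N i).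

Definition HW (N : nat) (J gamma : algC) : 'M[algC]_(2 ^ N) :=
  J *: \sum_(i < N)
        (- (2 *: site N sigmaz i)
         + site N sigmaz i *m site N sigmaz (nxt N i)
         - gamma *: dotS N i).

Definition Wstate (N : nat) : 'cV[algC]_(2 ^ N) :=
  \col_x ((sqrtC N%:R)^-1 * ([exists i : 'I_N, val x == (2 ^ i)%N])%:R).

Definition Zstate (N : nat) : 'cV[algC]_(2 ^ N) := \col_x ((val x == 0%N)%:R).

(* Main.v *)
Require Import Defs.
From HB Require Import structures.
From mathcomp Require Import all_boot all_order all_algebra all_field.
From mathcomp Require Import zify ring.
Import Order.TTheory GRing.Theory Num.Theory.
Local Open Scope ring_scope.
Set Implicit Arguments. Unset Strict Implicit.

Definition bn (i x : nat) : nat := (x %/ 2 ^ i) %% 2.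

Lemma pow2_gt0 n : (0 < 2 ^ n)%N. Proof. by rewrite expn_gt0. Qed.

Lemma bn_lt2 i x : (bn i x < 2)%N. Proof. by rewrite /bn ltn_pmod. Qed.

Lemma bitE i x y : (bit i x == bit i y) = (bn i x == bn i y).
Proof.
apply/eqP/eqP => h; last by rewrite /bit; move: h; rewrite /bn => ->.
move: h; rewrite /bit => /(congr1 (@nat_of_ord 2)).
by rewrite !inordK // ltn_pmod.
Qed.

Lemma bnA i j u r : (r < 2 ^ i)%N ->
  bn j (u * 2 ^ i + r) = if (j < i)%N then bn j r else bn (j - i) u.
Proof.
move=> hr; rewrite /bn; case: ltnP => hji.
  have -> : (2 ^ i = 2 ^ (i - j - 1) * 2 * 2 ^ j)%N.
    by rewrite -expnSr -expnD; apply: (congr1 (expn 2)); lia.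
  by rewrite mulnA divnMDl ?pow2_gt0 // mulnA modnMDl.
have -> : (2 ^ j = 2 ^ i * 2 ^ (j - i))%N by rewrite -expnD; apply: (congr1 (expn 2)); lia.
by rewrite divnMA divnMDl ?pow2_gt0 // (divn_small hr) addn0.
Qed.

Lemma bn_mod N j y : (j < N)%N -> bn j (y %% 2 ^ N) = bn j y.
Proof.
by move=> hj; rewrite {2}(divn_eq y (2 ^ N)) bnA ?ltn_pmod ?pow2_gt0 // hj.
Qed.

Lemma bnS j x : bn j.+1 x = bn j (x %/ 2).
Proof. by rewrite /bn expnS divnMA. Qed.

Lemma bn_inj N x y : (x < 2 ^ N)%N -> (y < 2 ^ N)%N ->
  (forall j, (j < N)%N -> bn j x = bn j y) -> x = y.
Proof.
elim: N x y => [|N IH] x y hx hy h.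
  by move: hx hy; rewrite expn0; clear h; case: x => [|[]]; case: y => [|[]].
rewrite (divn_eq x 2) (divn_eq y 2).
have h0 := h 0%N isT; rewrite /bn !expn0 !divn1 in h0; rewrite h0.
congr (_ * _ + _)%N; apply: IH.
- by rewrite ltn_divLR // -expnSr.
- by rewrite ltn_divLR // -expnSr.
by move=> j hj; rewrite -!bnS; apply: h.
Qed.

Definition flipn i x :=
  ((x %/ 2 ^ i %/ 2 * 2 ^ 1 + (1 - (x %/ 2 ^ i) %% 2)) * 2 ^ i + x %% 2 ^ i)%N.

Lemma bn_split i j x : (i <= j)%N -> bn j x = bn (j - i) (x %/ 2 ^ i).
Proof.
move=> h; rewrite {1}(divn_eq x (2 ^ i)) bnA ?ltn_pmod ?pow2_gt0 //.
by rewrite ltnNge h.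
Qed.

Lemma bn_flip i j x : bn j (flipn i x) = if j == i then (1 - bn i x)%N else bn j x.
Proof.
rewrite /flipn bnA ?ltn_pmod ?pow2_gt0 //.
case: (ltnP j i) => hji.
  have -> : (j == i) = false by apply/eqP; lia.
  by rewrite (@bn_mod i j x hji).
rewrite bnA; last by rewrite expn1; have := ltn_pmod (x %/ 2 ^ i) (isT : 0 < 2)%N; lia.
rewrite (@bn_split i j x hji); case: eqP => [->|hne].
  rewrite subnn /= (@bn_split i i x) // subnn /bn expn0 !divn1.
  by rewrite modn_small //; have := ltn_pmod (x %/ 2 ^ i) (isT : 0 < 2)%N; lia.
have -> : (j - i < 1)%N = false by lia.
rewrite -bnS; congr bn; lia.
Qed.



Definition flipo N i (x : 'I_(2 ^ N)) : 'I_(2 ^ N) :=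
  Ordinal (ltn_pmod (flipn i x) (pow2_gt0 N)).
Arguments flipo : clear implicits.

Lemma bn_flipo N i j x : (j < N)%N ->
  bn j (flipo N i x) = if j == i then (1 - bn i x)%N else bn j x.
Proof. by move=> hj; rewrite /= bn_mod // bn_flip. Qed.

Lemma ord_bits N (x y : 'I_(2 ^ N)) :
  (forall j, (j < N)%N -> bn j x = bn j y) -> x = y.
Proof. by move=> h; apply: val_inj; apply: (bn_inj (ltn_ord x) (ltn_ord y)). Qed.

Lemma flipo_neq N i x : (i < N)%N -> flipo N i x != x.
Proof.
move=> hi; apply/eqP => /(congr1 (fun y : 'I_(2 ^ N) => bn i y)); rewrite bn_flipo // eqxx.
by have := bn_lt2 i x; lia.
Qed.

Lemma site_entry N s i (x y : 'I_(2 ^ N)) : (i < N)%N ->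
  site N s i x y = if y == x then s (bit i x) (bit i x)
                   else if y == flipo N i x then s (bit i x) (bit i y) else 0.
Proof.
move=> hi; rewrite mxE.
set c := [forall j : 'I_N, _].
have cP : c -> forall j, (j < N)%N -> j != i -> bn j x = bn j y.
  move/forallP => h j hj hji; move: (h (Ordinal hj)); rewrite /= hji /=.
  by rewrite bitE => /eqP.
have Pc : (forall j, (j < N)%N -> j != i -> bn j x = bn j y) -> c.
  move=> h; apply/forallP => j; apply/implyP => hji; rewrite bitE.
  by apply/eqP; apply: h.
case: eqP => [hyx|hyx].
  rewrite hyx (_ : c = true) ?mulr1 //; apply: Pc => j _ _; by rewrite hyx.
case: eqP => [hyf|hyf].
  rewrite (_ : c = true) ?mulr1 //; apply: Pc => j hj hji.
  by rewrite hyf bn_flipo // (negbTE hji).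
rewrite (_ : c = false) ?mulr0 //; apply/negbTE/negP => /cP h.
have [e|ne] := eqVneq (bn i x) (bn i y).
  apply: hyx; apply: ord_bits => j hj; case: (eqVneq j i) => [->|hji].
    by rewrite e.
  by rewrite h.
apply: hyf; apply: ord_bits => j hj; rewrite bn_flipo //; case: (eqVneq j i) => [->|hji].
  by have := bn_lt2 i x; have := bn_lt2 i y; move: ne; lia.
by rewrite h.
Qed.

Lemma site_mulv N s i (v : 'cV[algC]_(2 ^ N)) x : (i < N)%N ->
  (site N s i *m v) x 0 = s (bit i x) (bit i x) * v x 0
     + s (bit i x) (bit i (flipo N i x)) * v (flipo N i x) 0.
Proof.
move=> hi; rewrite mxE (bigD1 x) //= (bigD1 (flipo N i x)) /=; last first.
  exact: flipo_neq.
rewrite big1 ?addr0; last first.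
  move=> y /andP [hyf hyx]; rewrite site_entry // (negbTE hyx) (negbTE hyf).
  by rewrite mul0r.
rewrite !site_entry // eqxx; have := flipo_neq x hi; case: eqP => // _ _.
by rewrite eqxx.
Qed.



Definition szn (a : nat) : algC := if a == 0%N then 1 else -1.
Definition cyn (a : nat) : algC := if a == 0%N then - 'i else 'i.

Lemma val_bit i x : val (bit i x) = bn i x.
Proof. by rewrite /bit /= inordK // ltn_pmod. Qed.

Lemma bn01 i x : bn i x = 0%N \/ bn i x = 1%N.
Proof. by have := bn_lt2 i x; lia. Qed.

Lemma bit_flip_neq N i (x : 'I_(2 ^ N)) : (i < N)%N ->
  (bit i x == bit i (flipo N i x)) = false.
Proof.
move=> hi; rewrite bitE bn_flipo // eqxx; apply/eqP; by have := bn_lt2 i x; lia.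
Qed.

Lemma Zv N i (v : 'cV[algC]_(2 ^ N)) x : (i < N)%N ->
  (site N sigmaz i *m v) x 0 = szn (bn i x) * v x 0.
Proof.
by move=> hi; rewrite site_mulv // !mxE eqxx bit_flip_neq // mul0r addr0 val_bit.
Qed.

Lemma Xv N i (v : 'cV[algC]_(2 ^ N)) x : (i < N)%N ->
  (site N sigmax i *m v) x 0 = v (flipo N i x) 0.
Proof.
by move=> hi; rewrite site_mulv // !mxE eqxx bit_flip_neq // mul0r add0r mul1r.
Qed.

Lemma Yv N i (v : 'cV[algC]_(2 ^ N)) x : (i < N)%N ->
  (site N sigmay i *m v) x 0 = cyn (bn i x) * v (flipo N i x) 0.
Proof.
move=> hi; rewrite site_mulv // !mxE !val_bit bn_flipo // eqxx /cyn.
by case: (bn01 i x) => ->; rewrite /= ?mul0r ?add0r.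
Qed.



Definition swp N i k (x : 'I_(2 ^ N)) : 'I_(2 ^ N) :=
  if bn i x == bn k x then x else flipo N k (flipo N i x).
Arguments swp : clear implicits.

Lemma ii : 'i * 'i = -1 :> algC.
Proof. by rewrite -expr2 sqrCi. Qed.

Lemma addE m n (A B : 'M[algC]_(m, n)) a b : (A + B) a b = A a b + B a b.
Proof. by rewrite mxE. Qed.

Lemma dotS_v N i (v : 'cV[algC]_(2 ^ N)) x : (i < N)%N -> (nxt N i < N)%N ->
  nxt N i != i ->
  (dotS N i *m v) x 0 = 2 * v (swp N i (nxt N i) x) 0 - v x 0.
Proof.
move=> hi hk hki.
rewrite /dotS !mulmxDl -!mulmxA !addE Xv // Xv // Yv // Yv // Zv // Zv //.
rewrite bn_flipo // (negbTE hki) /swp /szn /cyn !mulrA.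
case: (bn01 i x) => ->; case: (bn01 (nxt N i) x) => -> /=;
  rewrite ?mulrNN ?mulrN ?mulNr ?ii ?opprK; ring.
Qed.



Lemma oppE m n (A : 'M[algC]_(m, n)) a b : (- A) a b = - A a b.
Proof. by rewrite mxE. Qed.
Lemma sclE m n (A : 'M[algC]_(m, n)) c a b : (c *: A) a b = c * A a b.
Proof. by rewrite mxE. Qed.

Lemma nxt_lt N i : (0 < N)%N -> (nxt N i < N)%N.
Proof. by move=> h; rewrite /nxt ltn_pmod. Qed.

Lemma nxt_neq N i : (2 <= N)%N -> (i < N)%N -> nxt N i != i.
Proof.
move=> hN hi; rewrite /nxt; case: (ltnP i.+1 N) => h.
  by rewrite modn_small //; lia.
have -> : i.+1 = N by lia.
by rewrite modnn; lia.
Qed.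

Definition aD N (x i : nat) : algC :=
  -2 * szn (bn i x) + szn (bn i x) * szn (bn (nxt N i) x).

Lemma HW_v N J g (v : 'cV[algC]_(2 ^ N)) x : (2 <= N)%N ->
  (HW N J g *m v) x 0 = J * \sum_(i < N) (aD N x i * v x 0
                          - g * (2 * v (swp N i (nxt N i) x) 0 - v x 0)).
Proof.
move=> hN; rewrite /HW -scalemxAl sclE mulmx_suml summxE; congr (_ * _).
apply: eq_bigr => i _.
have hi := ltn_ord i; have hk := @nxt_lt N i (ltnW hN).
have hki := nxt_neq hN hi.
rewrite !mulmxDl !mulNmx -!scalemxAl -!mulmxA !addE !oppE !sclE dotS_v //.
rewrite Zv // Zv // Zv // /aD; ring.
Qed.



Definition tau (i k j : nat) : nat := if j == i then k else if j == k then i else j.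

Lemma tauK i k j : tau i k (tau i k j) = j.
Proof.
rewrite /tau; have [->|h1] := eqVneq j i.
  by rewrite eqxx; repeat (case: ifP => /eqP ?); lia.
have [->|h2] := eqVneq j k; try rewrite eqxx;
  repeat (case: ifP => /eqP ?); lia.
Qed.

Lemma tau_lt N i k j : (i < N)%N -> (k < N)%N -> (j < N)%N -> (tau i k j < N)%N.
Proof. by rewrite /tau => hi hk hj; repeat (case: ifP => _). Qed.

Lemma bn_swp N i k (x : 'I_(2 ^ N)) j : (i < N)%N -> (k < N)%N -> k != i ->
  (j < N)%N -> bn j (swp N i k x) = bn (tau i k j) x.
Proof.
move=> hi hk hki hj; rewrite /swp /tau.
case: (eqVneq (bn i x) (bn k x)) => h.
  case: (eqVneq j i) => [->//|hji]; case: (eqVneq j k) => [->//|hjk] //.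
rewrite !bn_flipo //; case: (eqVneq j i) => [->|hji].
  rewrite eq_sym (negbTE hki); move: h; have := bn_lt2 i x; have := bn_lt2 k x.
  lia.
case: (eqVneq j k) => [e|hjk] //=.
rewrite (negbTE hki); move: h; have := bn_lt2 i x; have := bn_lt2 k x; lia.
Qed.

Lemma swpK N i k (x : 'I_(2 ^ N)) : (i < N)%N -> (k < N)%N -> k != i ->
  swp N i k (swp N i k x) = x.
Proof.
move=> hi hk hki; apply: ord_bits => j hj.
by rewrite !bn_swp // ?tauK // tau_lt.
Qed.

Lemma rot_sum N (F : nat -> algC) : (0 < N)%N ->
  \sum_(i < N) F (nxt N i) = \sum_(i < N) F i.
Proof.
case: N => // n _; rewrite big_ord_recr big_ord_recl /= addrC /nxt modnn.
congr (_ + _); apply: eq_bigr => i _ /=; rewrite modn_small //.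
by have := ltn_ord i; lia.
Qed.

Definition EE N (x : nat) : algC :=
  \sum_(i < N) (1 - szn (bn i x)) * (1 - szn (bn (nxt N i) x)).

Lemma sumaD N x : (0 < N)%N -> \sum_(i < N) aD N x i = EE N x - N%:R.
Proof.
move=> hN; apply/eqP; rewrite eq_sym subr_eq /EE.
have -> : N%:R = \sum_(i < N) (1 : algC) by rewrite sumr_const card_ord.
rewrite -big_split /=.
have h0 : \sum_(i < N) (szn (bn i x) - szn (bn (nxt N i) x)) = 0.
  by rewrite sumrB (rot_sum (fun i => szn (bn i x))) // subrr.
rewrite -[X in _ == X]addr0 -[X in _ == _ + X]h0 -big_split /=; apply/eqP; apply: eq_bigr => i _.
rewrite /aD; ring.
Qed.

Lemma szn_ge (a : nat) : 0 <= 1 - szn a.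
Proof. rewrite /szn; case: eqP => _; by rewrite ?subrr // opprK addr_ge0 ?ler01. Qed.

Lemma EE_ge0 N x : 0 <= EE N x.
Proof. by apply: sumr_ge0 => i _; apply: mulr_ge0; apply: szn_ge. Qed.



Lemma HW_sym N J g (v : 'cV[algC]_(2 ^ N)) x : (2 <= N)%N ->
  (forall (i : 'I_N) y, v (swp N i (nxt N i) y) 0 = v y 0) ->
  (HW N J g *m v) x 0 = J * (EE N x - N%:R - g * N%:R) * v x 0.
Proof.
move=> hN hs; rewrite HW_v //.
under eq_bigr => i _ do rewrite hs.
rewrite sumrB -mulr_suml sumaD; last by lia.
rewrite -mulr_sumr sumr_const card_ord; ring.
Qed.

Lemma bn0 j : bn j 0 = 0%N.
Proof. by rewrite /bn div0n mod0n. Qed.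

Lemma swp0 N i k (y : 'I_(2 ^ N)) : val y = 0%N -> swp N i k y = y.
Proof. by move=> h; rewrite /swp h !bn0 eqxx. Qed.

Lemma EE0 N (x : nat) : x = 0%N -> EE N x = 0.
Proof.
move=> ->; rewrite /EE big1 // => i _; rewrite !bn0 /szn /= subrr mul0r //.
Qed.

Lemma bn_pow j k : bn j (2 ^ k) = (j == k).
Proof.
have := @bnA k j 1 0 (pow2_gt0 k); rewrite mul1n addn0 => ->.
case: ltnP => h.
  by rewrite bn0; have -> : (j == k) = false by apply/eqP; lia.
rewrite /bn; case: (eqVneq j k) => [->|hjk]; first by rewrite subnn.
rewrite divn_small //; have -> : (j - k = (j - k - 1).+1)%N by lia.
by rewrite expnS; have := pow2_gt0 (j - k - 1); lia.
Qed.

Definition wb N (x : 'I_(2 ^ N)) : bool := [exists i : 'I_N, val x == (2 ^ i)%N].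

Lemma wb_swp1 N i (x : 'I_(2 ^ N)) : (2 <= N)%N -> (i < N)%N ->
  wb x -> wb (swp N i (nxt N i) x).
Proof.
move=> hN hi /existsP [k /eqP hk].
have hn := @nxt_lt N i (ltnW hN); have hne := nxt_neq hN hi.
have ht := tau_lt hi hn (ltn_ord k).
apply/existsP; exists (Ordinal ht); apply/eqP => /=.
apply: (@bn_inj N); first exact: ltn_ord.
  by rewrite ltn_exp2l.
move=> j hj; rewrite bn_swp // hk !bn_pow.
by rewrite -{1}(tauK i (nxt N i) k) (can_eq (tauK i (nxt N i))).
Qed.

Lemma wb_swp N i (x : 'I_(2 ^ N)) : (2 <= N)%N -> (i < N)%N ->
  wb (swp N i (nxt N i) x) = wb x.
Proof.
move=> hN hi; apply/idP/idP; last exact: wb_swp1.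
have hn := @nxt_lt N i (ltnW hN); have hne := nxt_neq hN hi.
by move/(wb_swp1 hN hi); rewrite swpK.
Qed.

Lemma EEw N (x : 'I_(2 ^ N)) : (2 <= N)%N -> wb x -> EE N x = 0.
Proof.
move=> hN /existsP [k /eqP hk]; rewrite /EE big1 // => i _.
rewrite hk !bn_pow /szn; case: (eqVneq (val i) (val k)) => [e|ne].
  have hne := nxt_neq hN (ltn_ord i).
  rewrite -e (negbTE hne) /= subrr mulr0 //.
by rewrite /= subrr mul0r.
Qed.



Definition lam N (J g : algC) : algC := - (J * (N%:R + g * N%:R)).

Lemma Zeig N J g : (2 <= N)%N -> HW N J g *m Zstate N = lam N J g *: Zstate N.
Proof.
move=> hN; apply/matrixP => x j; rewrite (ord1 j) sclE HW_sym //.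
  rewrite /Zstate !mxE; case: (eqVneq (val x) 0%N) => h.
    by rewrite EE0 // /lam /= mulr1 mulr1; ring.
  by rewrite /= !mulr0.
move=> i y; rewrite /Zstate !mxE.
have hn := @nxt_lt N i (ltnW hN); have hne := nxt_neq hN (ltn_ord i).
case: (eqVneq (val y) 0%N) => h; first by rewrite swp0 ?h.
have : val (swp N i (nxt N i) y) != 0%N.
  apply/eqP => h2; move/eqP: h; apply; rewrite -(swpK y (ltn_ord i) hn hne) swp0 //.
by move/negbTE => ->.
Qed.

Lemma Weig N J g : (2 <= N)%N -> HW N J g *m Wstate N = lam N J g *: Wstate N.
Proof.
move=> hN; apply/matrixP => x j; rewrite (ord1 j) sclE HW_sym //.
  rewrite /Wstate !mxE; case: (boolP (wb x)) => h.
    rewrite EEw // /lam; move: h; rewrite /wb => ->; ring.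
  by move: h; rewrite /wb => /negbTE ->; rewrite !mulr0.
move=> i y; rewrite /Wstate !mxE.
by have := wb_swp y hN (ltn_ord i); rewrite /wb => ->.
Qed.



Definition n2 N (v : 'cV[algC]_(2 ^ N)) := \sum_x v x 0 * (v x 0)^*.

Lemma key_i N (v : 'cV[algC]_(2 ^ N)) (s : 'I_(2 ^ N) -> 'I_(2 ^ N)) :
  involutive s ->
  \sum_x (2 * v (s x) 0 - v x 0) * (v x 0)^* =
  n2 v - \sum_x (v x 0 - v (s x) 0) * (v x 0 - v (s x) 0)^*.
Proof.
move=> hs; have si : injective s := inv_inj hs.
set T := \sum_x v (s x) 0 * (v x 0)^*.
have hA : \sum_x v x 0 * (v (s x) 0)^* = T.
  by rewrite (reindex_inj si) /=; apply: eq_bigr => x _; rewrite hs.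
have hB : \sum_x v (s x) 0 * (v (s x) 0)^* = n2 v.
  by rewrite /n2 [RHS](reindex_inj si).
have -> : \sum_x (v x 0 - v (s x) 0) * (v x 0 - v (s x) 0)^* =
   n2 v - \sum_x v x 0 * (v (s x) 0)^* - T + \sum_x v (s x) 0 * (v (s x) 0)^*.
  rewrite /n2 /T -!sumrB -big_split /=; apply: eq_bigr => x _.
  rewrite rmorphB /=; ring.
have -> : \sum_x (2 * v (s x) 0 - v x 0) * (v x 0)^* = 2 * T - n2 v.
  rewrite /n2 /T mulr_sumr -sumrB; apply: eq_bigr => x _; ring.
rewrite hA hB; ring.
Qed.

Definition Pn N (v : 'cV[algC]_(2 ^ N)) (i : nat) :=
  \sum_x (v x 0 - v (swp N i (nxt N i) x) 0) * (v x 0 - v (swp N i (nxt N i) x) 0)^*.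

Lemma Sform N J g (v : 'cV[algC]_(2 ^ N)) : (2 <= N)%N ->
  \sum_x (HW N J g *m v) x 0 * (v x 0)^* =
  lam N J g * n2 v + J * (\sum_(x : 'I_(2 ^ N)) EE N x * (v x 0 * (v x 0)^*)
                          + g * \sum_(i < N) Pn v i).
Proof.
move=> hN.
have step1 : forall x, (HW N J g *m v) x 0 * (v x 0)^* =
   J * ((EE N (val x) - N%:R) * (v x 0 * (v x 0)^*)) - J * g *
   \sum_(i < N) (2 * v (swp N i (nxt N i) x) 0 - v x 0) * (v x 0)^*.
  move=> x; rewrite HW_v // sumrB -mulr_suml sumaD; last by lia.
  rewrite -mulr_sumr -mulr_suml; ring.
rewrite (eq_bigr _ (fun x _ => step1 x)) sumrB -!mulr_sumr exchange_big /=.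
have hk : forall i : 'I_N,
   \sum_x (2 * v (swp N i (nxt N i) x) 0 - v x 0) * (v x 0)^* = n2 v - Pn v i.
  move=> i; apply: key_i => y; apply: swpK => //.
    exact: nxt_lt (ltnW hN).
  exact: nxt_neq.
rewrite (eq_bigr _ (fun i _ => hk i)) sumrB sumr_const card_ord.
under eq_bigr => x _ do rewrite mulrBl.
rewrite sumrB -mulr_sumr -/(n2 v) /lam -mulr_natl; ring.
Qed.

Lemma n2_gt0 N (v : 'cV[algC]_(2 ^ N)) : v != 0 -> 0 < n2 v.
Proof.
move=> hv.
have [x hx] : exists x, v x 0 != 0.
  apply/existsP; apply: contraR hv => /existsPn h; apply/eqP/matrixP => a b.
  by rewrite (ord1 b) mxE; apply/eqP; have := h a; rewrite negbK.
rewrite /n2 (bigD1 x) //= ltr_wpDr //; last by rewrite mul_conjC_gt0.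
by apply: sumr_ge0 => y _; apply: mul_conjC_ge0.
Qed.

Lemma lower N J g mu (v : 'cV[algC]_(2 ^ N)) : (2 <= N)%N -> 0 < J -> 0 <= g ->
  v != 0 -> HW N J g *m v = mu *: v -> lam N J g <= mu.
Proof.
move=> hN hJ hg hv he.
have hS := Sform J g v hN; rewrite he in hS.
have hmu : \sum_x (mu *: v) x 0 * (v x 0)^* = mu * n2 v.
  rewrite /n2 mulr_sumr; apply: eq_bigr => x _; rewrite sclE mulrA //.
rewrite hmu in hS.
set R := (X in J * X) in hS.
have hR : 0 <= R.
  rewrite /R; apply: addr_ge0.
    by apply: sumr_ge0 => x _; apply: mulr_ge0; [apply: EE_ge0|apply: mul_conjC_ge0].
  apply: mulr_ge0 => //; apply: sumr_ge0 => i _; apply: sumr_ge0 => x _.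
  exact: mul_conjC_ge0.
have e : (mu - lam N J g) * n2 v = J * R by rewrite mulrBl hS; ring.
rewrite -subr_ge0 -(pmulr_lge0 _ (n2_gt0 hv)) e.
by apply: mulr_ge0 => //; apply: ltW.
Qed.



Lemma one_lt N : (0 < N)%N -> (1 < 2 ^ N)%N.
Proof. by move=> h; rewrite -{1}(expn0 2) ltn_exp2l. Qed.

Definition cW N : algC := (sqrtC N%:R)^-1.

Lemma cW_neq0 N : (0 < N)%N -> cW N != 0.
Proof. by move=> h; rewrite /cW invr_eq0 sqrtC_eq0 pnatr_eq0; lia. Qed.

Lemma W1 N (h : (0 < N)%N) (j : 'I_1) : Wstate N (Ordinal (one_lt h)) j = cW N.
Proof.
rewrite /Wstate mxE; have -> : [exists i : 'I_N, val (Ordinal (one_lt h)) == (2 ^ i)%N].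
  by apply/existsP; exists (Ordinal h).
by rewrite mulr1.
Qed.

Lemma W0 N (h : (0 < N)%N) (j : 'I_1) : Wstate N (Ordinal (pow2_gt0 N)) j = 0.
Proof.
rewrite /Wstate mxE; have -> : [exists i : 'I_N, val (Ordinal (pow2_gt0 N)) == (2 ^ i)%N] = false.
  by apply/existsP => -[i /eqP /= e]; have := pow2_gt0 i; lia.
by rewrite mulr0.
Qed.

Lemma Z0 N (j : 'I_1) : Zstate N (Ordinal (pow2_gt0 N)) j = 1.
Proof. by rewrite /Zstate mxE. Qed.

Lemma Z1 N (h : (0 < N)%N) (j : 'I_1) : Zstate N (Ordinal (one_lt h)) j = 0.
Proof. by rewrite /Zstate mxE. Qed.

Lemma rankWZ N : (0 < N)%N -> \rank (row_mx (Wstate N) (Zstate N)) = 2%N.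
Proof.
move=> h; apply/eqP; rewrite eqn_leq rank_leq_col /=.
set f := fun i : 'I_2 => if i == 0 then Ordinal (pow2_gt0 N) else Ordinal (one_lt h).
have := mxrankM_maxr (rowsub f 1%:M) (row_mx (Wstate N) (Zstate N)).
rewrite -rowsubE; apply: leq_trans.
set M := rowsub f _.
set B : 'M[algC]_2 := \matrix_(i < 2, j < 2)
   (if i == 0 then (if j == 0 then 0 else (cW N)^-1) else (if j == 0 then 1 else 0)).
have hMB : (M : 'M_2) *m B = 1%:M.
  apply/matrixP => i j; rewrite !mxE !big_ord_recl big_ord0 !mxE.
  have s0 : split (ord0 : 'I_(1 + 1)) = inl (ord0 : 'I_1).
    have e : (ord0 : 'I_(1 + 1)) = unsplit (inl (ord0 : 'I_1)) by apply: val_inj.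
    by rewrite e unsplitK.
  have s1 : split (lift ord0 ord0 : 'I_(1 + 1)) = inr (ord0 : 'I_1).
    have e : (lift ord0 ord0 : 'I_(1 + 1)) = unsplit (inr (ord0 : 'I_1)) by apply: val_inj.
    by rewrite e unsplitK.
  rewrite s0 s1.
  case: i => [[|[|//]]] hi; case: j => [[|[|//]]] hj /=; rewrite /f /=.
  all: rewrite ?W0 ?W1 ?Z0 ?Z1 // ?mul0r ?mulr0 ?mulr1 ?add0r ?addr0 //.
  by rewrite divff // cW_neq0.
have [uM _] := mulmx1_unit hMB.
by rewrite (mxrank_unit uM).
Qed.

Unset Implicit Arguments.

Theorem mainTheorem13 (N : nat) (J gamma : algC) :
  (3 <= N)%N -> 0 < J -> 0 < gamma ->
  exists lambda : algC,
    [/\ Wstate N != 0 /\ HW N J gamma *m Wstate N = lambda *: Wstate N,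
        (forall (mu : algC) (v : 'cV[algC]_(2 ^ N)),
            v != 0 -> HW N J gamma *m v = mu *: v -> lambda <= mu),
        Zstate N != 0 /\ HW N J gamma *m Zstate N = lambda *: Zstate N
      & \rank (row_mx (Wstate N) (Zstate N)) = 2%N].
Proof.
move=> hN hJ hg.
have h2 : (2 <= N)%N by lia.
have h0 : (0 < N)%N by lia.
exists (lam N J gamma); split.
- split; last exact: Weig.
  apply/eqP => e; have := W1 h0 0; rewrite e mxE => /esym/eqP.
  by rewrite (negbTE (cW_neq0 h0)).
- by move=> mu v hv he; apply: (lower h2 hJ (ltW hg) hv he).
- split; last exact: Zeig.
  apply/eqP => e; have := Z0 N 0; rewrite e mxE => /eqP.
  by rewrite eq_sym oner_eq0.
- exact: rankWZ.
Qed.
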